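(* Let $R$ be a ring and $n\geq 1$. Then $R$ is isomorphic to a direct product of $n$ left localization maximal rings if and only if the following conditions hold: (1) $\max\mathrm{Den}_l(R)=\{S_1,\ldots,S_n\}$ (with the $S_i$ distinct); (2) $\mathfrak{l}_R=0$; (3) $\mathrm{ass}(S_i)+\mathrm{ass}(S_j)=R$ for all $i\neq j$; (4) the factor rings $R/\mathrm{ass}(S_i)$, $i=1,\ldots,n$, are left localization maximal rings. Moreover, in this case: (a) for each $i$, the ring $R_i:=S_i^{-1}R$ is a left localization maximal ring, the homomorphism $\sigma_i:R\to R_i$, $r\mapsto\frac{r}{1}$, is surjective with $\ker(\sigma_i)=\mathrm{ass}(S_i)$, so $R_i\cong R/\mathrm{ass}(S_i)$; (b) the map $\sigma:=\prod_{i=1}^n\sigma_i:R\to\prod_{i=1}^nR_i$ is an isomorphism; (c) identifying $R$ with $\prod_{i=1}^nR_i$ via $\sigma$, one has $S_i=R_1\times\cdots\times R_i^*\times\cdots\times R_n=\sigma_i^{-1}(R_i^* )$, where $R_i^*$ is the group of units of $R_i\cong R/\mathrm{ass}(S_i)$, and $R_i^*=\sigma_i(S_i)$ for each $i$; (d) $\mathrm{ass}(S_i)=R_1\times\cdots\times 0\times\cdots\times R_n$ (with $0$ in the $i$-th place) for each $i$.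
   Context: All rings are associative with $1$. A multiplicative subset $S$ of $R$ ($1\in S$, $0\notin S$, closed under multiplication) is a left Ore set if $Sr\cap Rs\neq\emptyset$ for all $r\in R$, $s\in S$; for it, $\mathrm{ass}(S):=\{r\in R: sr=0\text{ for some } s\in S\}$. A left Ore set $S$ is a left denominator set if $rs=0$ ($r\in R$, $s\in S$) implies $tr=0$ for some $t\in S$. $\mathrm{Den}_l(R)$ is the set of left denominator sets, $S^{-1}R$ the left localization, $\max\mathrm{Den}_l(R)$ the set of maximal elements of $(\mathrm{Den}_l(R),\subseteq)$, and $\mathfrak{l}_R:=\bigcap_{S\in\max\mathrm{Den}_l(R)}\mathrm{ass}(S)$ the left localization radical. For a ring $A$, $S_0(A)$ is the largest left Ore set of $A$ consisting of regular elements (it exists and is a left denominator set) and $Q_l(A):=S_0(A)^{-1}A$. A ring $A$ is a left localization maximal ring if $A=Q_l(A)$ (i.e. $S_0(A)$ consists of units of $A$) and $\{\mathrm{ass}(S): S\in\mathrm{Den}_l(A)\}=\{0\}$. *)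

(* Defs.v *)
(* Rings are (possibly non-commutative) nzRingType's
   (associative with 1, 1 <> 0: the statement needs 0 \notin S, 1 \in S). *)
From mathcomp Require Import all_boot all_algebra.
Set Implicit Arguments. Unset Strict Implicit. Unset Printing Implicit Defensive.
Import GRing.Theory.
Local Open Scope ring_scope.

Definition rset (R : Type) := R -> Prop.

Definition is_unit (R : nzRingType) (x : R) : Prop :=
  exists y : R, x * y = 1 /\ y * x = 1.

Section Defs.
Variable R : nzRingType.


Definition regular (x : R) : Prop :=
  (forall y : R, x * y = 0 -> y = 0) /\ (forall y : R, y * x = 0 -> y = 0).

Definition mult_subset (S : rset R) : Prop :=
  S 1 /\ ~ S 0 /\ (forall a b : R, S a -> S b -> S (a * b)).

Definition left_ore (S : rset R) : Prop :=
  mult_subset S /\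
  (forall r s : R, S s -> exists s' r' : R, S s' /\ s' * r = r' * s).

Definition ass (S : rset R) : rset R := fun r => exists s : R, S s /\ s * r = 0.

Definition left_den (S : rset R) : Prop :=
  left_ore S /\
  (forall r s : R, S s -> r * s = 0 -> exists t : R, S t /\ t * r = 0).

Definition max_den (S : rset R) : Prop :=
  left_den S /\
  (forall T : rset R, left_den T -> (forall x, S x -> T x) -> forall x, T x -> S x).

Definition lrad : rset R := fun r => forall S : rset R, max_den S -> ass S r.

(* S_0(R): the largest left Ore set of regular elements, i.e. the union of
   all left Ore sets consisting of regular elements *)
Definition S0 : rset R :=
  fun x => exists S : rset R, left_ore S /\ (forall y, S y -> regular y) /\ S x.

(* left localization maximal ring: R = Q_l(R) (S_0(R) consists of units) and
   ass(S) = 0 for every left denominator set S *)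
Definition left_loc_max : Prop :=
  (forall x : R, S0 x -> is_unit x) /\
  (forall S : rset R, left_den S -> forall r : R, ass S r -> r = 0).

Definition is_left_loc (S : rset R) (Q : nzRingType) (f : {rmorphism R -> Q}) : Prop :=
  (forall s : R, S s -> is_unit (f s)) /\
  (forall q : Q, exists s r : R, S s /\ f s * q = f r) /\
  (forall r : R, f r = 0 <-> ass S r).

Definition ideal_sum_full (I J : rset R) : Prop :=
  forall x : R, exists a b : R, I a /\ J b /\ x = a + b.

End Defs.

(* the factor ring R/I is a left localization maximal ring: realised as the
   codomain of a surjective ring homomorphism with kernel I *)
Definition quot_left_loc_max (R : nzRingType) (I : rset R) : Prop :=
  exists (B : nzRingType) (g : {rmorphism R -> B}),
    (forall b : B, exists r : R, g r = b) /\
    (forall r : R, g r = 0 <-> I r) /\ left_loc_max B.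


Definition prod_iso (R : nzRingType) (n : nat) (A : 'I_n -> nzRingType)
    (f : forall i, {rmorphism R -> A i}) : Prop :=
  (forall r r' : R, (forall i, f i r = f i r') -> r = r') /\
  (forall a : forall i, A i, exists r : R, forall i, f i r = a i).

Definition conditions (R : nzRingType) (n : nat) (S : 'I_n -> rset R) : Prop :=
  ((forall T : rset R, max_den T <-> exists i, forall x, T x <-> S i x) /\
   (forall i j, i <> j -> ~ (forall x, S i x <-> S j x))) /\
  (forall r : R, lrad r -> r = 0) /\
  (forall i j, i <> j -> ideal_sum_full (ass (S i)) (ass (S j))) /\
  (forall i, quot_left_loc_max (ass (S i))).

(* Main.v *)
Require Import Defs.
From mathcomp Require Import all_boot all_algebra.
From Stdlib Require Import Classical ClassicalEpsilon FunctionalExtensionality PropExtensionality.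
Set Implicit Arguments. Unset Strict Implicit. Unset Printing Implicit Defensive.
Import GRing.Theory.
Local Open Scope ring_scope.

Lemma set_ext (T : Type) (A B : T -> Prop) : (forall x, A x <-> B x) -> A = B.
Proof. move=> h; apply: functional_extensionality => x; exact: propositional_extensionality. Qed.

Lemma prod_zero_seq (T : nzRingType) (I : eqType) (s : seq I) (F : I -> T) k :
  k \in s -> F k = 0 -> \prod_(j <- s) F j = 0.
Proof.
elim: s => //= x s IH; rewrite in_cons big_cons => /orP [/eqP <- -> | /IH h /h ->];
  by rewrite ?mul0r ?mulr0.
Qed.

Lemma prod_zero (T : nzRingType) n (P : pred 'I_n) (F : 'I_n -> T) k :
  P k -> F k = 0 -> \prod_(j | P j) F j = 0.
Proof.
move=> Pk Fk; rewrite -big_filter; apply: (@prod_zero_seq _ _ _ F k _ Fk).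
by rewrite mem_filter Pk mem_index_enum.
Qed.

Lemma unit_not0 (A : nzRingType) : ~ is_unit (0 : A).
Proof. by case=> y [h _]; move: h; rewrite mul0r => /eqP; rewrite eq_sym oner_eq0. Qed.

Lemma unit1 (A : nzRingType) : is_unit (1 : A).
Proof. by exists 1; rewrite mulr1. Qed.

Lemma unitM (A : nzRingType) (x y : A) : is_unit x -> is_unit y -> is_unit (x * y).
Proof.
case=> x' [h1 h2] [y' [h3 h4]]; exists (y' * x'); split.
  by rewrite mulrA -(mulrA x) h3 mulr1.
by rewrite mulrA -(mulrA y') h2 mulr1.
Qed.

Lemma rmorph_unit (A B : nzRingType) (f : {rmorphism A -> B}) x : is_unit x -> is_unit (f x).
Proof. by case=> y [h1 h2]; exists (f y); rewrite -!rmorphM h1 h2 rmorph1. Qed.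

Lemma den_unit (A : nzRingType) (T : rset A) : left_loc_max A -> left_den T ->
  forall x, T x -> is_unit x.
Proof.
case=> hS0 hass hT x Tx; apply: hS0; exists T; split; first by case: hT.
split=> // y Ty; split=> z hz; apply: (hass T hT).
  by exists y.
case: hT => _ hd; case: (hd z y Ty hz) => t [Tt htz]; by exists t.
Qed.

Definition SU (R : nzRingType) n (A : 'I_n -> nzRingType) (f : forall i, {rmorphism R -> A i})
  (i : 'I_n) : rset R := fun r => is_unit (f i r).

Lemma idem_ex (R : nzRingType) n (A : 'I_n -> nzRingType) (f : forall i, {rmorphism R -> A i})
  (Hiso : prod_iso f) i : exists e : R, forall j, f j e = if j == i then 1 else 0.
Proof. by case: Hiso => _ /(_ (fun j => if j == i then 1 else 0)). Qed.

Lemma fsurj (R : nzRingType) n (A : 'I_n -> nzRingType) (f : forall i, {rmorphism R -> A i})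
  (Hiso : prod_iso f) i (b : A i) : exists r, f i r = b.
Proof.
pose a := fun j => match i =P j with ReflectT E => eq_rect i A b j E | ReflectF _ => 0 end.
case: Hiso => _ /(_ a) [r hr]; exists r; rewrite hr /a.
by case: (i =P i) => // E; rewrite (eq_irrelevance E erefl).
Qed.

Lemma ass_SU (R : nzRingType) n (A : 'I_n -> nzRingType) (f : forall i, {rmorphism R -> A i})
  (Hiso : prod_iso f) i r : ass (SU f i) r <-> f i r = 0.
Proof.
split.
  case=> s [[y [h1 h2]]] hs.
  by rewrite -[f i r]mul1r -h2 -mulrA -rmorphM hs rmorph0 mulr0.
move=> h; case: (idem_ex Hiso i) => e he; exists e; split.
  by rewrite /SU he eqxx; apply: unit1.
case: Hiso => inj _; apply: inj => j; rewrite rmorphM he rmorph0.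
by case: eqP => [->|_]; rewrite ?h ?mulr0 ?mul0r.
Qed.

Lemma SU_den (R : nzRingType) n (A : 'I_n -> nzRingType) (f : forall i, {rmorphism R -> A i})
  (Hiso : prod_iso f) i : left_den (SU f i).
Proof.
case: (idem_ex Hiso i) => e he.
have Se : SU f i e by rewrite /SU he eqxx; apply: unit1.
split; [split; [split; [|split]|] |].
- by rewrite /SU rmorph1; apply: unit1.
- by rewrite /SU rmorph0; apply: unit_not0.
- by move=> a b ha hb; rewrite /SU rmorphM; apply: unitM.
- move=> r s [v [h1 h2]].
  case: (fsurj Hiso v) => s1 hs1.
  exists e, (e * r * s1); split=> //.
  case: Hiso => inj _; apply: inj => j; rewrite !rmorphM he.
  case: eqP => [->|_]; last by rewrite !mul0r.
  by rewrite hs1 -mulrA h2 mulr1.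
- move=> r s [v [h1 h2]] hrs; exists e; split=> //.
  have h0 : f i r = 0 by rewrite -[f i r]mulr1 -h1 mulrA -rmorphM hrs rmorph0 mul0r.
  case: Hiso => inj _; apply: inj => j; rewrite rmorphM he rmorph0.
  by case: eqP => [->|_]; rewrite ?h0 ?mulr0 ?mul0r.
Qed.

Lemma img_den (R : nzRingType) n (A : 'I_n -> nzRingType) (f : forall i, {rmorphism R -> A i})
  (Hiso : prod_iso f) i (T : rset R) : left_den T -> (forall t, T t -> f i t <> 0) ->
  left_den (fun a => exists t, T t /\ f i t = a).
Proof.
move=> [[[T1 [T0 TM]] Tore] Tden] hnz.
case: (idem_ex Hiso i) => e he.
split; [split; [split; [|split]|] |].
- by exists 1; rewrite rmorph1.
- by case=> t [Tt ht]; apply: (hnz t Tt).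
- by move=> a b [t [Tt <-]] [t' [Tt' <-]]; exists (t * t'); rewrite rmorphM; split=> //; apply: TM.
- move=> r s [t [Tt <-]]; case: (fsurj Hiso r) => r1 <-.
  case: (Tore r1 t Tt) => s' [r' [Ts' h]].
  by exists (f i s'), (f i r'); split; [exists s' | rewrite -!rmorphM h].
- move=> r s [t [Tt <-]] hrs; case: (fsurj Hiso r) => r1 hr1.
  have h0 : e * r1 * t = 0.
    case: Hiso => inj _; apply: inj => j; rewrite !rmorphM he rmorph0.
    by case: eqP => [->|_]; rewrite ?hr1 ?hrs ?mul1r ?mul0r.
  case: (Tden (e * r1) t Tt h0) => t' [Tt' h'].
  exists (f i t'); split; first by exists t'.
  by move: (congr1 (f i) h'); rewrite !rmorphM he eqxx mul1r hr1 rmorph0.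
Qed.

Lemma den_sub (R : nzRingType) n (A : 'I_n -> nzRingType) (f : forall i, {rmorphism R -> A i})
  (Hiso : prod_iso f) (Hmax : forall i, left_loc_max (A i)) (T : rset R) : left_den T ->
  exists i, forall t, T t -> SU f i t.
Proof.
move=> hT.
suff [i hi] : exists i, forall t, T t -> f i t <> 0.
  exists i => t Tt; apply: (den_unit (Hmax i) (img_den Hiso hT hi)); by exists t.
apply: NNPP => hn.
have hall : forall i, exists t, T t /\ f i t = 0.
  move=> i; apply: NNPP => hi; apply: hn; exists i => t Tt h; apply: hi; by exists t.
pose t i := proj1_sig (constructive_indefinite_description _ (hall i)).
have ht i : T (t i) /\ f i (t i) = 0 := proj2_sig (constructive_indefinite_description _ (hall i)).
case: hT => [[[T1 [T0 TM]] _] _]; apply: T0.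
have -> : (0 : R) = \prod_(i < n) t i.
  case: Hiso => inj _; apply: inj => j; rewrite rmorph0 rmorph_prod.
  by rewrite (@prod_zero _ _ _ _ j) // (ht j).2.
by apply: big_ind => // i _; exact: (ht i).1.
Qed.

Lemma SU_max (R : nzRingType) n (A : 'I_n -> nzRingType) (f : forall i, {rmorphism R -> A i})
  (Hiso : prod_iso f) (Hmax : forall i, left_loc_max (A i)) i : max_den (SU f i).
Proof.
split; first exact: SU_den.
move=> T hT hsub t Tt.
case: (idem_ex Hiso i) => e he.
have Se : SU f i e by rewrite /SU he eqxx; apply: unit1.
have hi : forall t, T t -> f i t <> 0.
  move=> x Tx h0; case: hT => [[[_ [T0 TM]] _] _]; apply: T0.
  have <- : x * e = 0.
    case: Hiso => inj _; apply: inj => j; rewrite rmorphM he rmorph0.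
    by case: eqP => [->|_]; rewrite ?h0 ?mulr0 ?mul0r.
  by apply: TM => //; apply: hsub.
apply: (den_unit (Hmax i) (img_den Hiso hT hi)); by exists t.
Qed.

Lemma max_class (R : nzRingType) n (A : 'I_n -> nzRingType) (f : forall i, {rmorphism R -> A i})
  (Hiso : prod_iso f) (Hmax : forall i, left_loc_max (A i)) (T : rset R) :
  max_den T <-> exists i, forall x, T x <-> SU f i x.
Proof.
split.
  move=> [hT hm]; case: (den_sub Hiso Hmax hT) => i hi; exists i => x; split; first exact: hi.
  by apply: hm => //; apply: SU_den.
case=> i hi; rewrite (set_ext hi); exact: SU_max.
Qed.

Lemma fwd_cond (R : nzRingType) n (A : 'I_n -> nzRingType) (f : forall i, {rmorphism R -> A i})
  (Hiso : prod_iso f) (Hmax : forall i, left_loc_max (A i)) : conditions (SU f).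
Proof.
split; [split|split; [|split]].
- exact: max_class.
- move=> i j hij heq; case: (idem_ex Hiso i) => e he.
  have : SU f j e by apply/heq; rewrite /SU he eqxx; apply: unit1.
  rewrite /SU he; case: eqP => [E|_]; first by move=> _; apply: hij; rewrite E.
  exact: unit_not0.
- move=> r hr; case: (Hiso) => inj _; apply: inj => j; rewrite rmorph0.
  by apply/(ass_SU Hiso); apply: hr; apply: SU_max.
- move=> i j hij x; case: (idem_ex Hiso i) => e he.
  exists (x - e * x), (e * x); split; last split; last by rewrite subrK.
    by apply/(ass_SU Hiso); rewrite rmorphB rmorphM he eqxx mul1r subrr.
  apply/(ass_SU Hiso); rewrite rmorphM he; case: eqP => [E|_]; last by rewrite mul0r.
  by case: hij; rewrite E.
- move=> i; exists (A i), (f i); split; first exact: fsurj.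
  split; last exact: Hmax.
  by move=> r; rewrite ass_SU.
Qed.

Lemma ass_ext (R : nzRingType) (S T : rset R) : (forall x, S x <-> T x) -> forall r, ass S r <-> ass T r.
Proof. by move=> h; rewrite (set_ext h). Qed.

Lemma rev_iso (R : nzRingType) n (S : 'I_n -> rset R) (HS : conditions S)
  (B : 'I_n -> nzRingType) (g : forall i, {rmorphism R -> B i})
  (hsurj : forall i (b : B i), exists r, g i r = b)
  (hker : forall i r, g i r = 0 <-> ass (S i) r) : prod_iso g.
Proof.
case: HS => [[H1 _] [H2 [H3 _]]].
split.
  move=> r r' h; apply/eqP; rewrite -subr_eq0; apply/eqP; apply: H2 => T /H1 [i hi].
  by apply/(ass_ext hi)/hker; rewrite rmorphB h subrr.
move=> a.
have hb : forall i j, i <> j -> exists b, g i b = 1 /\ g j b = 0.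
  move=> i j hij; case: (H3 i j hij 1) => x [y [hx [hy e]]].
  exists y; split; last by apply/hker.
  have gx : g i x = 0 by apply/hker.
  by rewrite -[g i y]add0r -gx -rmorphD -e rmorph1.
pose b i j := if i =P j is ReflectF E then proj1_sig (constructive_indefinite_description _ (hb i j E)) else 0.
have hbP : forall i j, i != j -> g i (b i j) = 1 /\ g j (b i j) = 0.
  move=> i j /eqP hij; rewrite /b; case: (i =P j) => // E.
  exact: (proj2_sig (constructive_indefinite_description _ (hb i j E))).
pose u i := \prod_(j < n | j != i) b i j.
have hu : forall i k, g k (u i) = if k == i then 1 else 0.
  move=> i k; rewrite rmorph_prod; case: eqP => [->|/eqP hki].
    by apply: big1 => j hj; apply: (hbP i j _).1; rewrite eq_sym.
  apply: (@prod_zero _ _ _ _ k); first by rewrite hki.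
  by case: (hbP i k) => //; rewrite eq_sym.
pose r i := proj1_sig (constructive_indefinite_description _ (hsurj i (a i))).
have hr i : g i (r i) = a i := proj2_sig (constructive_indefinite_description _ (hsurj i (a i))).
exists (\sum_i r i * u i) => k.
rewrite rmorph_sum (bigD1 k) //= rmorphM hu eqxx mulr1 hr big1 ?addr0 // => i hik.
by rewrite rmorphM hu eq_sym (negbTE hik) mulr0.
Qed.

Lemma iso_llm (B Q : nzRingType) (h : B -> Q)
  (hM : forall x y, h (x * y) = h x * h y) (h1 : h 1 = 1) (h0 : h 0 = 0)
  (hinj : forall x y, h x = h y -> x = y) (hsurj : forall q, exists b, h b = q) :
  left_loc_max B -> left_loc_max Q.
Proof.
move=> [HS0 Hass].
have ore : forall T : rset Q, left_ore T -> left_ore (fun b => T (h b)).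
  move=> T [[T1 [T0 TM]] Tore]; split; [split; [|split]|].
  - by rewrite h1.
  - by rewrite h0.
  - by move=> a b ha hb; rewrite hM; apply: TM.
  - move=> r s hs; case: (Tore (h r) (h s) hs) => s' [r' [Ts' e]].
    case: (hsurj s') => s1 hs1; case: (hsurj r') => r1 hr1.
    exists s1, r1; split; first by rewrite hs1.
    by apply: hinj; rewrite !hM hs1 hr1.
have den : forall T : rset Q, left_den T -> left_den (fun b => T (h b)).
  move=> T [hT Tden]; split; first exact: ore.
  move=> r s hs e; case: (Tden (h r) (h s) hs); first by rewrite -hM e h0.
  move=> t [Tt et]; case: (hsurj t) => t1 ht1; exists t1; split; first by rewrite ht1.
  by apply: hinj; rewrite hM ht1 et h0.
split.
  move=> q [T [hT [hreg Tq]]]; case: (hsurj q) => b hb.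
  have : is_unit b.
    apply: HS0; exists (fun b => T (h b)); split; first exact: ore.
    split; last by rewrite hb.
    move=> y Ty; case: (hreg _ Ty) => r1 r2; split=> z hz; apply: hinj; rewrite h0.
      by apply: r1; rewrite -hM hz.
    by apply: r2; rewrite -hM hz.
  case=> c [c1 c2]; rewrite -hb; exists (h c); by rewrite -!hM c1 c2.
move=> T hT r [s [Ts e]]; case: (hsurj r) => b hb; subst r; case: (hsurj s) => s1 hs1.
suff -> : b = 0 by [].
apply: (Hass _ (den T hT)); exists s1; split; first by rewrite hs1.
by apply: hinj; rewrite hM hs1 e h0.
Qed.

Lemma ker_eq (R B Q : nzRingType) (g : {rmorphism R -> B}) (s : {rmorphism R -> Q})
  (hk : forall r, g r = 0 <-> s r = 0) x y : g x = g y -> s x = s y.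
Proof.
move=> e; apply/eqP; rewrite -subr_eq0 -rmorphB; apply/eqP/hk.
by rewrite rmorphB e subrr.
Qed.

Lemma transfer_llm (R B Q : nzRingType) (g : {rmorphism R -> B}) (s : {rmorphism R -> Q})
  (gs : forall b, exists r, g r = b) (ss : forall q, exists r, s r = q)
  (hk : forall r, g r = 0 <-> s r = 0) : left_loc_max B -> left_loc_max Q.
Proof.
pose pre b := proj1_sig (constructive_indefinite_description _ (gs b)).
have preP b : g (pre b) = b := proj2_sig (constructive_indefinite_description _ (gs b)).
pose h b := s (pre b).
have hg r : h (g r) = s r by rewrite /h; apply: (ker_eq hk); exact: preP.
have hk' : forall r, s r = 0 <-> g r = 0 by move=> r; rewrite hk.
apply: (@iso_llm B Q h).
- move=> x y; rewrite -(preP x) -(preP y) -rmorphM !hg; exact: rmorphM.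
- by rewrite -(rmorph1 g) hg rmorph1.
- by rewrite -(rmorph0 g) hg rmorph0.
- move=> x y; rewrite -(preP x) -(preP y) !hg => e; exact: (ker_eq hk' e).
- by move=> q; case: (ss q) => r <-; exists (g r).
Qed.

Lemma transfer_unit (R B Q : nzRingType) (g : {rmorphism R -> B}) (s : {rmorphism R -> Q})
  (gs : forall b, exists r, g r = b)
  (hk : forall r, g r = 0 <-> s r = 0) r : is_unit (g r) -> is_unit (s r).
Proof.
case=> c [c1 c2]; case: (gs c) => r1 hr1; exists (s r1).
rewrite -!rmorphM -(rmorph1 s); split; apply: (ker_eq hk); by rewrite rmorphM hr1 ?c1 ?c2 rmorph1.
Qed.

Lemma choose_B (R : nzRingType) n (S : 'I_n -> rset R)
  (H4 : forall i, quot_left_loc_max (ass (S i))) :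
  exists (B : 'I_n -> nzRingType) (g : forall i, {rmorphism R -> B i}),
   (forall i b, exists r, g i r = b) /\ (forall i r, g i r = 0 <-> ass (S i) r) /\
   (forall i, left_loc_max (B i)).
Proof.
pose cB i := constructive_indefinite_description _ (H4 i).
pose B i := proj1_sig (cB i).
pose cg i := constructive_indefinite_description _ (proj2_sig (cB i)).
exists B, (fun i => proj1_sig (cg i)).
split; last split; move=> i; by case: (proj2_sig (cg i)) => [? [? ?]].
Qed.

Theorem theorem2p11 (R : nzRingType) (n : nat) (hn : (1 <= n)%N) :
  ((exists (A : 'I_n -> nzRingType) (f : forall i, {rmorphism R -> A i}),
      (forall i, left_loc_max (A i)) /\ prod_iso f)
   <-> (exists S : 'I_n -> rset R, conditions S))
  /\
  (forall S : 'I_n -> rset R, conditions S ->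
   forall (Q : 'I_n -> nzRingType) (sigma : forall i, {rmorphism R -> Q i}),
   (forall i, is_left_loc (S i) (sigma i)) ->
   (* (a) *)
   (forall i, left_loc_max (Q i) /\
              (forall q : Q i, exists r : R, sigma i r = q) /\
              (forall r : R, sigma i r = 0 <-> ass (S i) r)) /\
   (* (b) *)
   prod_iso sigma /\
   (* (c) *)
   (forall i, (forall r : R, S i r <-> is_unit (sigma i r)) /\
              (forall q : Q i, is_unit q <-> exists s : R, S i s /\ sigma i s = q)) /\
   (* (d) *)
   (forall i (r : R), ass (S i) r <-> sigma i r = 0)).
Proof.
split.
  split.
    by case=> A [f [Hm Hiso]]; exists (SU f); apply: fwd_cond.
  case=> S HS; case: (choose_B HS.2.2.2) => B [g [gs [gk gm]]].
  by exists B, g; split=> //; exact: (rev_iso HS gs gk).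
move=> S HS Q sigma Hloc.
case: (choose_B HS.2.2.2) => B [g [gs [gk gm]]].
have Hiso := rev_iso HS gs gk.
have key : forall i x, S i x <-> SU g i x.
  move=> i; have : max_den (S i) by apply/(HS.1.1 (S i)); exists i.
  case/(max_class Hiso gm) => j hj.
  case: (eqVneq i j) => [E|/eqP hij]; first by subst j; exact: hj.
  have kk : forall r, g i r = 0 <-> g j r = 0.
    by move=> r; rewrite gk (ass_ext hj) ass_SU.
  case: (HS.2.2.1 i j hij 1) => x [y [hx [hy e]]].
  have gx : g i x = 0 by apply/gk.
  have gy : g i y = 0 by apply/kk/gk.
  by move: (oner_neq0 (B i)); rewrite -(rmorph1 (g i)) e rmorphD gx gy addr0 eqxx.
have ker : forall i r, g i r = 0 <-> sigma i r = 0.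
  by move=> i r; rewrite gk; case: (Hloc i) => _ [_ h]; rewrite h.
have ker' : forall i r, sigma i r = 0 <-> g i r = 0 by move=> i r; rewrite ker.
have ssurj : forall i (q : Q i), exists r, sigma i r = q.
  move=> i q; case: (Hloc i) => _ [/(_ q) [s [r [Ss e]]] _].
  case/key: Ss => c [c1 c2]; case: (gs i c) => s1 hs1.
  have e1 : sigma i (s1 * s) = 1.
    rewrite -(rmorph1 (sigma i)); apply: (ker_eq (ker i)); by rewrite rmorphM hs1 c2 rmorph1.
  by exists (s1 * r); rewrite rmorphM -e mulrA -rmorphM e1 mul1r.
split.
  move=> i; split; first exact: (transfer_llm (gs i) (ssurj i) (ker i)).
  by split; [apply: ssurj | case: (Hloc i) => _ [_ h]].
split.
  split.
    move=> r r' h; case: Hiso => inj _; apply: inj => i; exact: (ker_eq (ker' i)).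
  move=> a.
  pose r i := proj1_sig (constructive_indefinite_description _ (ssurj i (a i))).
  have hr i : sigma i (r i) = a i := proj2_sig (constructive_indefinite_description _ (ssurj i (a i))).
  case: Hiso => _ /(_ (fun i => g i (r i))) [x hx]; exists x => i.
  by rewrite -hr; apply: (ker_eq (ker i)).
split.
  move=> i; split.
    move=> r; split; first by case: (Hloc i) => h _; apply: h.
    by move=> hu; apply/key; exact: (transfer_unit (ssurj i) (ker' i)).
  move=> q; split.
    case: (ssurj i q) => r <- hu; exists r; split=> //; apply/key.
    exact: (transfer_unit (ssurj i) (ker' i)).
  by case=> s [Ss <-]; case: (Hloc i) => h _; apply: h.
by move=> i r; case: (Hloc i) => _ [_ h]; rewrite h.
Qed.
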